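(* Let $R$ be a local ring and $s\in R$ a central element. Then $A\in M_2(R;s)$ is strongly $J$-clean if and only if one of the following holds: (1) $A\in J\big(M_2(R;s)\big)$; (2) $I_2-A\in J\big(M_2(R;s)\big)$; (3) $s\in U(R)$ and $A$ is similar to $\left[\begin{smallmatrix} v&0\\ 0&w\end{smallmatrix}\right]$ for some $v\in 1+J(R)$, $w\in J(R)$; (4) $s\in J(R)$ and $A$ is similar to $\left[\begin{smallmatrix} v&0\\ 0&w\end{smallmatrix}\right]$ or to $\left[\begin{smallmatrix} w&0\\ 0&v\end{smallmatrix}\right]$ for some $v\in 1+J(R)$, $w\in J(R)$.
   Context: All rings are associative with identity. A ring $R$ is local if $R/J(R)$ is a division ring, where $J(R)$ is the Jacobson radical; $U(R)$ is the group of units. For a ring $R$ and a central element $s\in R$, $M_2(R;s)$ denotes the ring whose elements are the $2\times 2$ arrays $\left[\begin{smallmatrix} a&b\\ c&d\end{smallmatrix}\right]$ with $a,b,c,d\in R$, with componentwise addition and multiplication $\left[\begin{smallmatrix} a&b\\ c&d\end{smallmatrix}\right]\left[\begin{smallmatrix} a'&b'\\ c'&d'\end{smallmatrix}\right]=\left[\begin{smallmatrix} aa'+s^2bc'&ab'+bd'\\ ca'+dc'&s^2cb'+dd'\end{smallmatrix}\right]$, with identity $I_2$. Two elements $A,B\in M_2(R;s)$ are similar if $B=P^{-1}AP$ for some unit $P$ of $M_2(R;s)$. An element $a$ of a ring $T$ is strongly $J$-clean if there is an idempotent $e\in T$ with $ae=ea$ and $a-e\in J(T)$. *)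

(* Defs.v *)
From mathcomp Require Import all_boot all_algebra.
Set Implicit Arguments. Unset Strict Implicit. Unset Printing Implicit Defensive.
Import GRing.Theory.
Local Open Scope ring_scope.

Section RingNotions.
Variable R : nzRingType.

Definition runit (x : R) : Prop := exists y : R, x * y = 1 /\ y * x = 1.

(* Jacobson radical J(R), via its standard element-wise description:
   x \in J(R) iff 1 - y x is a unit for every y. *)
Definition jac (x : R) : Prop := forall y : R, runit (1 - y * x).

(* R/J(R) is a division ring, written out literally on representatives:
   1 is nonzero mod J, and every element that is nonzero mod J has a
   two-sided inverse mod J. *)
Definition local_ring : Prop :=
  ~ jac 1 /\
  forall x : R, ~ jac x -> exists y : R, jac (x * y - 1) /\ jac (y * x - 1).

Definition central (s : R) : Prop := forall x : R, s * x = x * s.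
End RingNotions.

Record M2 (R : Type) := mkM2 { m11 : R; m12 : R; m21 : R; m22 : R }.
Arguments mkM2 {R}.

Section M2ops.
Variables (R : nzRingType) (s : R).

Definition M2add (A B : M2 R) : M2 R :=
  mkM2 (m11 A + m11 B) (m12 A + m12 B) (m21 A + m21 B) (m22 A + m22 B).
Definition M2opp (A : M2 R) : M2 R :=
  mkM2 (- m11 A) (- m12 A) (- m21 A) (- m22 A).
Definition M2sub (A B : M2 R) : M2 R := M2add A (M2opp B).
Definition M2one : M2 R := mkM2 1 0 0 1.
Definition M2mul (A B : M2 R) : M2 R :=
  mkM2 (m11 A * m11 B + s ^+ 2 * m12 A * m21 B)
       (m11 A * m12 B + m12 A * m22 B)
       (m21 A * m11 B + m22 A * m21 B)
       (s ^+ 2 * m21 A * m12 B + m22 A * m22 B).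

Definition M2unit (P : M2 R) : Prop :=
  exists Q : M2 R, M2mul P Q = M2one /\ M2mul Q P = M2one.

Definition M2jac (A : M2 R) : Prop :=
  forall Y : M2 R, M2unit (M2sub M2one (M2mul Y A)).

Definition M2similar (A B : M2 R) : Prop :=
  exists P Q : M2 R, M2mul P Q = M2one /\ M2mul Q P = M2one /\
                     B = M2mul (M2mul Q A) P.

Definition M2idem (E : M2 R) : Prop := M2mul E E = E.

Definition M2strongly_J_clean (A : M2 R) : Prop :=
  exists E : M2 R, M2idem E /\ M2mul A E = M2mul E A /\ M2jac (M2sub A E).
End M2ops.

Definition diag2 (R : nzRingType) (v w : R) : M2 R := mkM2 v 0 0 w.

(* Main.v *)
From HB Require Import structures.
Require Import Defs.
From mathcomp Require Import all_boot all_algebra.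
From Stdlib Require Import Classical.
Set Implicit Arguments. Unset Strict Implicit. Unset Printing Implicit Defensive.
Import GRing.Theory.
Local Open Scope ring_scope.

Section Gen.
Variable K : nzRingType.
Implicit Types x y z u : K.

Lemma runit1 : runit (1 : K). Proof. by exists 1; rewrite mulr1. Qed.
Lemma runitM x y : runit x -> runit y -> runit (x * y).
Proof.
move=> [x' [h1 h2]] [y' [h3 h4]]; exists (y' * x'); split.
  by rewrite mulrA -(mulrA x) h3 mulr1.
by rewrite mulrA -(mulrA y') h2 mulr1.
Qed.
Lemma runit_swap x y : runit (1 - x * y) -> runit (1 - y * x).
Proof.
move=> [u [h1 h2]]; exists (1 + y * u * x); split.
  have e : u - x * y * u = 1 by rewrite -h1 mulrBl mul1r.
  have key : y * x = y * u * x - y * x * (y * u * x).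
    by rewrite -{1}(mulr1 y) -e mulrBr mulrBl !mulrA.
  rewrite mulrBl mul1r mulrDr mulr1 [X in _ - (X + _)]key.
  by rewrite subrK addrK.
have e : u - u * (x * y) = 1 by rewrite -h2 mulrBr mulr1.
have key : y * x = y * u * x - (y * u * x) * (y * x).
  by rewrite -{1}(mulr1 y) -e mulrBr mulrBl !mulrA.
rewrite mulrBr mulr1 mulrDl mul1r [X in _ - (X + _)]key.
by rewrite subrK addrK.
Qed.
Lemma jac0 : jac (0 : K). Proof. by move=> y; rewrite mulr0 subr0; exact: runit1. Qed.
Lemma jacN x : jac x -> jac (- x).
Proof. by move=> h y; rewrite mulrN -mulNr; apply: h. Qed.
Lemma jacMl x y : jac x -> jac (y * x).
Proof. by move=> h z; rewrite mulrA; apply: h. Qed.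
Lemma jacMr x y : jac x -> jac (x * y).
Proof. by move=> h z; rewrite mulrA; apply: runit_swap; rewrite mulrA; apply: h. Qed.
Lemma jac_unit1 x : jac x -> runit (1 - x).
Proof. by move=> h; have := h 1; rewrite mul1r. Qed.
Lemma jacD x y : jac x -> jac y -> jac (x + y).
Proof.
move=> hx hy z; have [v [h1 h2]] := hx z.
have -> : 1 - z * (x + y) = (1 - z * x) * (1 - (v * z) * y).
  by rewrite mulrBr mulr1 !mulrA h1 mul1r mulrDr opprD addrA.
by apply: runitM; [apply: hx | apply: hy].
Qed.
Lemma jacB x y : jac x -> jac y -> jac (x - y).
Proof. by move=> hx hy; apply: jacD => //; apply: jacN. Qed.
Lemma jac_unit_false x : jac x -> runit x -> False.
Proof.
move=> h [x' [h1 h2]]; have [w [h3 _]] := h x'.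
by move: h3; rewrite h2 subrr mul0r => /eqP; rewrite eq_sym oner_eq0.
Qed.
Lemma jac_cancel u x : runit u -> jac (u * x) -> jac x.
Proof. by move=> [u' [h1 h2]] h; rewrite -[x]mul1r -h2 -mulrA; apply: jacMl. Qed.
Lemma jac_cancelr u x : runit u -> jac (x * u) -> jac x.
Proof. by move=> [u' [h1 h2]] h; rewrite -[x]mulr1 -h1 mulrA; apply: jacMr. Qed.

Lemma local_unit x : local_ring K -> ~ jac x -> runit x.
Proof.
move=> [_ hl] nx; have [y [h1 h2]] := hl x nx.
have u1 : runit (x * y).
  have := jac_unit1 (jacN h1); by rewrite opprK addrC subrK.
have u2 : runit (y * x).
  have := jac_unit1 (jacN h2); by rewrite opprK addrC subrK.
move: u1 u2 => [w [e1 _]] [w' [_ e2]].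
exists (y * w); split; first by rewrite mulrA.
have : w' * y = y * w.
  by rewrite -[w' * y]mulr1 -e1 !mulrA -(mulrA _ y x) e2 mul1r.
by move=> <-; rewrite -mulrA.
Qed.
Lemma local_dich x : local_ring K -> jac x \/ runit x.
Proof. move=> hl; case: (classic (jac x)) => h; [by left | by right; apply: local_unit]. Qed.
End Gen.

Record cs (R : nzRingType) := CS { sv : R; svc : central sv }.

Definition T (R : nzRingType) (c : cs R) := M2 R.
Section TT.
Variables (R : nzRingType) (c : cs R).
Local Notation T := (T c).
Definition tup (A : T) := (m11 A, m12 A, m21 A, m22 A).
Definition untup (x : R * R * R * R) : T := let: (a,b,c,d) := x in mkM2 a b c d.
Lemma tupK : cancel tup untup. Proof. by case. Qed.
HB.instance Definition _ := Choice.copy T (can_type tupK).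
Let s := sv c.
Lemma M2addA : associative (@M2add R). Proof. by move=> [????] [????] [????]; rewrite /M2add /= !addrA. Qed.
Lemma M2addC : commutative (@M2add R). Proof. by move=> [????] [????]; rewrite /M2add /=; congr mkM2; apply: addrC. Qed.
Definition M2zero : T := mkM2 0 0 0 0.
Lemma M2add0 : left_id M2zero (@M2add R). Proof. by move=> [????]; rewrite /M2add /= !add0r. Qed.
Lemma M2addN : left_inverse M2zero (@M2opp R) (@M2add R). Proof. by move=> [????]; rewrite /M2add /= !addNr. Qed.
HB.instance Definition _ := GRing.isZmodule.Build T M2addA M2addC M2add0 M2addN.

Lemma cs2 (x : R) : x * s ^+ 2 = s ^+ 2 * x.
Proof. by rewrite expr2 mulrA -(svc c x) -mulrA -(svc c x) mulrA. Qed.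

Lemma M2mulA : associative (M2mul s).
Proof.
move=> [????] [????] [????]; rewrite /M2mul /=; have ct := cs2; move: (s ^+ 2) ct => t ct.
congr mkM2; rewrite !(mulrDl, mulrDr) !mulrA ?ct ?mulrA; try by rewrite addrACA.
Qed.

Lemma M2mul1 : left_id (M2one R) (M2mul s).
Proof. by move=> [????]; rewrite /M2mul /= !(mul1r, mul0r, mulr0, addr0, add0r). Qed.
Lemma M2mulr1 : right_id (M2one R) (M2mul s).
Proof. by move=> [????]; rewrite /M2mul /= !(mulr1, mul0r, mulr0, addr0, add0r). Qed.
Lemma M2mulDl : left_distributive (M2mul s) (@M2add R).
Proof.
move=> [????] [????] [????]; rewrite /M2mul /M2add /=; congr mkM2;
 rewrite !(mulrDl, mulrDr); try by rewrite addrACA.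
Qed.
Lemma M2mulDr : right_distributive (M2mul s) (@M2add R).
Proof.
move=> [????] [????] [????]; rewrite /M2mul /M2add /=; congr mkM2;
 rewrite !(mulrDl, mulrDr); try by rewrite addrACA.
Qed.
Lemma M2one_neq0 : (M2one R : T) != 0.
Proof. by apply/eqP => -[] /eqP; rewrite oner_eq0. Qed.
HB.instance Definition _ := GRing.Zmodule_isNzRing.Build T M2mulA M2mul1 M2mulr1 M2mulDl M2mulDr M2one_neq0.

Lemma mulTE (A B : T) : A * B = M2mul s A B. Proof. by []. Qed.
Lemma addTE (A B : T) : A + B = M2add A B. Proof. by []. Qed.
Lemma oppTE (A : T) : - A = M2opp A. Proof. by []. Qed.
Lemma oneTE : (1 : T) = M2one R. Proof. by []. Qed.
Lemma zeroTE : (0 : T) = mkM2 0 0 0 0. Proof. by []. Qed.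
Lemma jacTE (A : T) : M2jac s A <-> jac A. Proof. by []. Qed.
End TT.

Section M.
Variables (R : nzRingType) (c : cs R).
Local Notation s := (sv c).
Local Notation T := (T c).

Ltac simplT := rewrite ?mulTE ?addTE ?oppTE ?oneTE /M2mul /M2add /M2opp /M2one /=.
Ltac zsimp := rewrite ?(mulr0, mul0r, addr0, add0r, mulr1, mul1r, subr0, sub0r, oppr0).

Lemma lower_unit a cc d : runit a -> runit d -> runit (mkM2 a 0 cc d : T).
Proof.
move=> [a' [h1 h2]] [d' [h3 h4]].
exists (mkM2 a' 0 (- (d' * cc * a')) d'); simplT; zsimp; split; congr mkM2 => //.
  by rewrite mulrN !mulrA h3 mul1r subrr.
by rewrite mulNr -!mulrA h2 mulr1 addNr.
Qed.

Lemma upper_unit a b d : runit a -> runit d -> runit (mkM2 a b 0 d : T).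
Proof.
move=> [a' [h1 h2]] [d' [h3 h4]].
exists (mkM2 a' (- (a' * b * d')) 0 d'); simplT; zsimp; split; congr mkM2 => //.
  by rewrite mulrN !mulrA h1 mul1r ?subrr ?addNr ?addrN.
by rewrite mulNr -!mulrA h4 mulr1 ?subrr ?addNr ?addrN.
Qed.

Lemma jac11 a : jac a -> jac (mkM2 a 0 0 0 : T).
Proof. move=> ha [y1 y2 y3 y4]; simplT; zsimp. apply: lower_unit; [exact: ha | exact: runit1]. Qed.
Lemma jac22 d : jac d -> jac (mkM2 0 0 0 d : T).
Proof. move=> ha [y1 y2 y3 y4]; simplT; zsimp. apply: upper_unit; [exact: runit1 | exact: ha]. Qed.
Lemma jac12 b : (forall y, runit (1 - s ^+ 2 * y * b)) -> jac (mkM2 0 b 0 0 : T).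
Proof. move=> ha [y1 y2 y3 y4]; simplT; zsimp. apply: upper_unit; [exact: runit1 | exact: ha]. Qed.
Lemma jac21 b : (forall y, runit (1 - s ^+ 2 * y * b)) -> jac (mkM2 0 0 b 0 : T).
Proof. move=> ha [y1 y2 y3 y4]; simplT; zsimp. apply: lower_unit; [exact: ha | exact: runit1]. Qed.

Lemma cond_jac b : jac b -> forall y, runit (1 - s ^+ 2 * y * b).
Proof. by move=> h y; apply: h. Qed.
Lemma cond_s b : jac s -> forall y, runit (1 - s ^+ 2 * y * b).
Proof.
move=> h y; have -> : s ^+ 2 * y * b = (s * y * b) * s by rewrite -(svc c (s * y * b)) expr2 !mulrA.
exact: h.
Qed.
Lemma decomp a b cc d : (mkM2 a b cc d : T) =
  (mkM2 a 0 0 0 : T) + (mkM2 0 b 0 0 : T) + (mkM2 0 0 cc 0 : T) + (mkM2 0 0 0 d : T).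
Proof. by simplT; zsimp. Qed.
Lemma jac_entries a b cc d : jac a -> jac b -> jac cc -> jac d -> jac (mkM2 a b cc d : T).
Proof.
move=> ha hb hc hd; rewrite decomp; apply: jacD; last exact: jac22.
apply: jacD; last by apply: jac21; apply: cond_jac.
by apply: jacD; [apply: jac11 | apply: jac12; apply: cond_jac].
Qed.
Lemma jac_entries_s a b cc d : jac s -> jac a -> jac d -> jac (mkM2 a b cc d : T).
Proof.
move=> hs ha hd; rewrite decomp; apply: jacD; last exact: jac22.
apply: jacD; last by apply: jac21; apply: cond_s.
by apply: jacD; [apply: jac11 | apply: jac12; apply: cond_s].
Qed.
Lemma jac_diag a d : jac (mkM2 a 0 0 d : T) -> jac a /\ jac d.
Proof.
move=> h; split=> y.
  have [[q1 q2 q3 q4] [e1 e2]] := h (mkM2 y 0 0 0).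
  move: e1 e2; simplT; zsimp; case=> e1 _ _ _; case=> e2 _ _ _.
  by exists q1.
have [[q1 q2 q3 q4] [e1 e2]] := h (mkM2 0 0 0 y).
move: e1 e2; simplT; zsimp; case=> _ _ _ e1; case=> _ _ _ e2.
by exists q4.
Qed.

Definition sim (A B : T) := exists P Q : T, P * Q = 1 /\ Q * P = 1 /\ B = Q * A * P.
Definition F11 : T := mkM2 1 0 0 0.

Lemma main_case e1 e2 e3 e4 (A : T) (E : T) : E = mkM2 e1 e2 e3 e4 ->
  E * E = E -> runit e1 -> runit (1 - e4) -> A * E = E * A -> jac (A - E) ->
  exists v w, jac (v - 1) /\ jac w /\ sim A (mkM2 v 0 0 w).
Proof.
move=> Ed hE [a' [ha1 ha2]] [f' [hf1 hf2]] hc hj.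
move: (hE); rewrite Ed; simplT; case=> eq11 eq12 eq21 eq22.
have h1 : e2 * (1 - e4) = e1 * e2 by rewrite mulrBr mulr1 -{1}eq12 addrK.
have h2 : e4 * (1 - e4) = s ^+ 2 * e3 * e2 by rewrite mulrBr mulr1 -{1}eq22 addrK.
have h3 : s ^+ 2 * e3 * a' * e2 * (1 - e4) = s ^+ 2 * e3 * e2.
  by rewrite -(mulrA _ e2) h1 mulrA -(mulrA _ a' e1) ha2 mulr1.
have key : s ^+ 2 * e3 * a' * e2 = e4.
  by rewrite -(mulr1 (s ^+ 2 * e3 * a' * e2)) -hf1 mulrA h3 -h2 -mulrA hf1 mulr1.
set u : T := mkM2 e1 (- e2) e3 (1 - e4).
have hu : u = (mkM2 1 0 (e3 * a') 1 : T) * mkM2 e1 (- e2) 0 1.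
  rewrite /u; simplT; zsimp; congr mkM2.
    by rewrite -mulrA ha2 mulr1.
  by rewrite mulrN !mulrA key addrC.
have [u' [huu' hu'u]] : runit u.
  rewrite hu; apply: runitM; [apply: lower_unit | apply: upper_unit]; try exact: runit1.
  by exists a'.
have Eu : E * u = u * F11.
  rewrite Ed /u /F11; simplT; zsimp; congr mkM2; first [exact: eq11 | exact: eq21 | by rewrite mulrN h1 addNr | by rewrite mulrN h2 addNr].
have hF : u' * E * u = F11 by rewrite -mulrA Eu mulrA hu'u mul1r.
have hB : u' * A * u * F11 = F11 * (u' * A * u).
  rewrite -hF !mulrA -!(mulrA _ u u') huu' !mulr1.
  by rewrite -(mulrA u' A E) hc !mulrA.
have hJ : jac (u' * A * u - F11).
  by rewrite -hF -mulrBl -mulrBr; apply: jacMr; apply: jacMl.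
case Bdef : (u' * A * u) hB hJ => [b1 b2 b3 b4].
rewrite /F11; simplT; zsimp; case=> eb2 eb3; subst b2 b3.
move/jac_diag=> [hb1 hb4].
exists b1, b4; split => //; split => //.
by rewrite /sim; exists u, u'; rewrite Bdef.
Qed.

Definition sig (X : T) : T := mkM2 (m22 X) (m21 X) (m12 X) (m11 X).
Lemma sigM X Y : sig (X * Y) = sig X * sig Y.
Proof. by case: X => ????; case: Y => ????; rewrite /sig; simplT; congr mkM2; rewrite addrC. Qed.
Lemma sig1 : sig 1 = 1. Proof. by []. Qed.
Lemma sigB X Y : sig (X - Y) = sig X - sig Y.
Proof. by case: X => ????; case: Y => ????. Qed.
Lemma sigK X : sig (sig X) = X. Proof. by case: X. Qed.
Lemma runit_sig X : runit X -> runit (sig X).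
Proof. by move=> [X' [h1 h2]]; exists (sig X'); rewrite -!sigM h1 h2. Qed.
Lemma jac_sig X : jac X -> jac (sig X).
Proof.
move=> h Y; have -> : 1 - Y * sig X = sig (1 - sig Y * X) by rewrite sigB sigM sigK.
exact: runit_sig.
Qed.

Lemma sym_case e1 e2 e3 e4 (A : T) (E : T) : E = mkM2 e1 e2 e3 e4 ->
  E * E = E -> runit e4 -> runit (1 - e1) -> A * E = E * A -> jac (A - E) ->
  exists v w, jac (v - 1) /\ jac w /\ sim A (mkM2 w 0 0 v).
Proof.
move=> Ed hE h4 h1 hc hj.
have [v [w [hv [hw [P [Q [hPQ [hQP hD]]]]]]]] :
    exists v w, jac (v - 1) /\ jac w /\ sim (sig A) (mkM2 v 0 0 w).
  apply: (@main_case e4 e3 e2 e1 (sig A) (sig E)) => //.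
  - by rewrite Ed.
  - by rewrite -sigM hE.
  - by rewrite -!sigM hc.
  - by rewrite -sigB; apply: jac_sig.
exists v, w; split => //; split => //.
exists (sig P), (sig Q); rewrite -!sigM hPQ hQP; split => //; split => //.
by rewrite -(sigK A) -!sigM -hD.
Qed.

Lemma sim_trans A B C : sim A B -> sim B C -> sim A C.
Proof.
move=> [P [Q [h1 [h2 ->]]]] [P' [Q' [h1' [h2' ->]]]].
exists (P * P'), (Q' * Q); split; last split.
- by rewrite -mulrA (mulrA P') h1' mul1r.
- by rewrite -mulrA (mulrA Q) h2 mul1r.
- by rewrite !mulrA.
Qed.

Lemma sim_swap v w : runit s -> sim (mkM2 w 0 0 v) (mkM2 v 0 0 w).
Proof.
move=> [s' [hs1 hs2]].
have ht : s ^+ 2 * (s' * s') = 1 by rewrite expr2 -mulrA (mulrA s s') hs1 mul1r.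
exists (mkM2 0 1 1 0), (mkM2 0 (s' * s') (s' * s') 0); simplT; zsimp.
split; [|split]; congr mkM2; try exact: ht; by rewrite mulrA; rewrite [X in X * _]ht mul1r.
Qed.

Lemma back (A D F : T) : sim A D -> F * F = F -> D * F = F * D -> jac (D - F) ->
  exists E : T, E * E = E /\ A * E = E * A /\ jac (A - E).
Proof.
move=> [P [Q [hPQ [hQP hD]]]] hF hDF hj.
have hA : A = P * D * Q by rewrite hD !mulrA hPQ mul1r -mulrA hPQ mulr1.
exists (P * F * Q); split; last split.
- by rewrite !mulrA -(mulrA _ Q P) hQP mulr1 -(mulrA P F F) hF.
- by rewrite hA !mulrA -!(mulrA _ Q P) hQP !mulr1 -(mulrA P D F) hDF !mulrA.
- by rewrite hA -mulrBl -mulrBr; apply: jacMr; apply: jacMl.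
Qed.

Lemma back1 (A : T) v w : jac (v - 1) -> jac w -> sim A (mkM2 v 0 0 w) ->
  exists E : T, E * E = E /\ A * E = E * A /\ jac (A - E).
Proof.
move=> hv hw hs; apply: (back (F := mkM2 1 0 0 0) hs); simplT; zsimp => //.
by apply: jac_entries => //; apply: jac0.
Qed.
Lemma back2 (A : T) v w : jac (v - 1) -> jac w -> sim A (mkM2 w 0 0 v) ->
  exists E : T, E * E = E /\ A * E = E * A /\ jac (A - E).
Proof.
move=> hv hw hs; apply: (back (F := mkM2 0 0 0 1) hs); simplT; zsimp => //.
by apply: jac_entries => //; apply: jac0.
Qed.

Lemma case_J (A E : T) e1 e2 e3 e4 : E = mkM2 e1 e2 e3 e4 -> E * E = E ->
  jac e1 -> jac e4 -> jac (A - E) -> jac A.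
Proof.
move=> Ed hE h1 h4 hj; move: (hE); rewrite Ed; simplT; case=> _ eq12 eq21 _.
have h2 : jac e2.
  have : jac (e1 * e2 + e2 * e4) by apply: jacD; [apply: jacMr | apply: jacMl].
  by rewrite eq12.
have h3 : jac e3.
  have : jac (e3 * e1 + e4 * e3) by apply: jacD; [apply: jacMl | apply: jacMr].
  by rewrite eq21.
rewrite -(subrK E A); apply: jacD => //; rewrite Ed; exact: jac_entries.
Qed.

Lemma case_1 (A E : T) e1 e2 e3 e4 : E = mkM2 e1 e2 e3 e4 -> E * E = E ->
  runit e1 -> jac (1 - e4) -> jac (A - E) -> jac (1 - A).
Proof.
move=> Ed hE u1 hf hj.
have [eq11 eq12 eq21] : [/\ e1 * e1 + s ^+ 2 * e2 * e3 = e1, e1 * e2 + e2 * e4 = e2 & e3 * e1 + e4 * e3 = e3].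
  by move: (hE); rewrite Ed; simplT; case=> ? ? ? _.
have h1 : e2 * (1 - e4) = e1 * e2 by rewrite mulrBr mulr1 -{1}eq12 addrK.
have h1' : (1 - e4) * e3 = e3 * e1 by rewrite mulrBl mul1r -{1}eq21 addrK.
have he2 : jac e2 by apply: (jac_cancel u1); rewrite -h1; apply: jacMl.
have he3 : jac e3 by apply: (jac_cancelr u1); rewrite -h1'; apply: jacMr.
have h11 : e1 * (1 - e1) = s ^+ 2 * e2 * e3.
  by rewrite mulrBr mulr1 -{1}eq11 [e1 * e1 + _]addrC addrK.
have he1 : jac (1 - e1).
  by apply: (jac_cancel u1); rewrite h11; apply: jacMr; apply: jacMl.
have -> : 1 - A = (1 - E) - (A - E) by rewrite opprB addrA subrK.
apply: jacB => //.
have -> : 1 - E = mkM2 (1 - e1) (- e2) (- e3) (1 - e4) by rewrite Ed; simplT; zsimp.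
by apply: jac_entries => //; apply: jacN.
Qed.
End M.

Unset Implicit Arguments.

Theorem lemma2p8 (R : nzRingType) (s : R) (A : M2 R) :
  local_ring R -> central s ->
  (M2strongly_J_clean s A <->
     [\/ M2jac s A,
         M2jac s (M2sub (M2one R) A),
         runit s /\ (exists v w : R, jac (v - 1) /\ jac w /\
                       M2similar s A (diag2 v w))
       | jac s /\ (exists v w : R, jac (v - 1) /\ jac w /\
                       (M2similar s A (diag2 v w) \/ M2similar s A (diag2 w v)))]).
Proof.
move=> hl hs; pose c := @CS R s hs.
change ((exists E : T c, E * E = E /\ (A : T c) * E = E * A /\ jac ((A : T c) - E)) <->
  [\/ jac (A : T c), jac (1 - (A : T c)),
     runit s /\ (exists v w : R, jac (v - 1) /\ jac w /\ sim (A : T c) (mkM2 v 0 0 w))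
   | jac s /\ (exists v w : R, jac (v - 1) /\ jac w /\
        (sim (A : T c) (mkM2 v 0 0 w) \/ sim (A : T c) (mkM2 w 0 0 v)))]).
split.
  move=> [E [hE [hc hj]]].
  have Ed : E = mkM2 (m11 E) (m12 E) (m21 E) (m22 E) by case: (E).
  move: Ed; set e1 := m11 E; set e2 := m12 E; set e3 := m21 E; set e4 := m22 E => Ed.
  have [he1|he1] := local_dich e1 hl.
    have [he4|he4] := local_dich e4 hl.
      by apply: Or41; apply: (case_J Ed hE he1 he4 hj).
    have [v [w [hv [hw hsim]]]] := sym_case Ed hE he4 (jac_unit1 he1) hc hj.
    have [hsJ|hsU] := local_dich s hl.
      by apply: Or44; split => //; exists v, w; split => //; split => //; right.
    apply: Or43; split => //; exists v, w; split => //; split => //.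
    exact: (sim_trans hsim (@sim_swap R c v w hsU)).
  have [he4|he4] := local_dich (1 - e4) hl.
    by apply: Or42; apply: (case_1 Ed hE he1 he4 hj).
  have [v [w [hv [hw hsim]]]] := main_case Ed hE he1 he4 hc hj.
  have [hsJ|hsU] := local_dich s hl.
    by apply: Or44; split => //; exists v, w; split => //; split => //; left.
  by apply: Or43; split => //; exists v, w.
case=> [h|h|[_ [v [w [hv [hw hsim]]]]]|[_ [v [w [hv [hw [hsim|hsim]]]]]]].
- exists (0 : T c); rewrite !mul0r mulr0 subr0; split => //.
- exists (GRing.one (T c)); rewrite !mul1r mulr1; split => //; split => //.
  by have := jacN h; rewrite opprB.
- exact: (back1 hv hw hsim).
- exact: (back1 hv hw hsim).
- exact: (back2 hv hw hsim).
Qed.
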